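(* Let $d\ge1$, let $v\in(\Sigma^d)^*$ be nonempty, let $r\in[0,d-1]$ and let $w$ be the length-$r$ prefix of $v$. Then $\downarrow_{\preceq_d}(v^*w)=\{u\in\Sigma^*\mid |u|\equiv r \pmod d \text{ and } \kappa_d(u)(i)\subseteq\kappa_d(v)(i)\text{ for all }i\in[1,d]\}$.
   Context: $u\preceq_d v$ iff $v$ arises from $u$ by inserting factors whose lengths are divisible by $d$, i.e. $u=u_0\cdots u_n$ and $v=u_0v_1u_1\cdots v_nu_n$ with $d\mid |v_i|$. For $w\in\Sigma^*$ and $i\in[1,d]$, $\kappa_d(w)(i)$ is the set of letters $a\in\Sigma$ that occur in $w$ at some position $p$ (positions numbered from $1$) with $p\equiv i\pmod d$. $\downarrow_{\preceq_d}S=\{x\mid\exists s\in S: x\preceq_d s\}$. *)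

(* Defs.v *)
From mathcomp Require Import all_boot.
Set Implicit Arguments. Unset Strict Implicit. Unset Printing Implicit Defensive.

(* u ⪯_d v : v = u0 v1 u1 ... vn un where u = u0 u1 ... un and d | |v_i|.
   The decomposition is given by u0 and the list of pairs (v_i, u_i), i=1..n. *)
Definition subword_d (T : Type) (d : nat) (u v : seq T) : Prop :=
  exists (u0 : seq T) (ps : seq (seq T * seq T)),
    [/\ u = u0 ++ flatten (map snd ps),
        v = u0 ++ flatten (map (fun p => p.1 ++ p.2) ps)
      & all (fun p => d %| size p.1) ps].

Definition down_d (T : Type) (d : nat) (S : seq T -> Prop) : seq T -> Prop :=
  fun x => exists s, S s /\ subword_d d x s.

(* κ_d(w)(i): letters occurring in w at a position p (numbered from 1)
   with p ≡ i (mod d). Position j+1 corresponds to 0-based index j. *)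
Definition kappa (T : finType) (d : nat) (w : seq T) (i : nat) : {set T} :=
  [set a | [exists j : 'I_(size w), (j.+1 == i %[mod d]) && (tnth (in_tuple w) j == a)]].

Definition star_cat (T : Type) (v w : seq T) : seq T -> Prop :=
  fun x => exists k, x = flatten (nseq k v) ++ w.

(* Main.v *)
Require Import Defs.
From mathcomp Require Import all_boot zify.
Set Implicit Arguments. Unset Strict Implicit. Unset Printing Implicit Defensive.

Section Aux.
Variable T : finType.
Variable d : nat.
Variable x0 : T.

Definition Pr (x s : seq T) : Prop :=
  size x = size s %[mod d] /\
  forall j, j < size x -> exists2 j', j' < size s &
     (j' = j %[mod d]) /\ nth x0 x j = nth x0 s j'.

Lemma Pr_cat x1 s1 x2 s2 : Pr x1 s1 -> Pr x2 s2 -> Pr (x1 ++ x2) (s1 ++ s2).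
Proof.
move=> [H1 K1] [H2 K2]; split.
  by rewrite !size_cat -modnDm H1 H2 modnDm.
move=> j; rewrite size_cat => Hj.
case: (ltnP j (size x1)) => Hj1.
  have [j' Hj' [E1 E2]] := K1 j Hj1.
  exists j'; first by rewrite size_cat ltn_addr.
  by rewrite !nth_cat Hj1 Hj' E2.
have Hj2 : j - size x1 < size x2 by rewrite ltn_subLR.
have [j' Hj' [E1 E2]] := K2 _ Hj2.
exists (size s1 + j'); first by rewrite size_cat ltn_add2l.
split.
  by rewrite -modnDm E1 -H1 modnDm subnKC.
by rewrite !nth_cat ltnNge Hj1 /= ltnNge leq_addr /= addKn.
Qed.

Lemma Pr_refl x : Pr x x.
Proof. by split => // j Hj; exists j. Qed.

Lemma Pr_gap g : d %| size g -> Pr [::] g.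
Proof. move=> H; split => //=. by rewrite mod0n; apply/esym/eqP; rewrite -/(dvdn d _). Qed.

Lemma subword_Pr x s : subword_d d x s -> Pr x s.
Proof.
move=> [u0 [ps [-> -> Hall]]].
apply: Pr_cat; first exact: Pr_refl.
elim: ps Hall => [|p ps IH] /=; first by move=> _; exact: Pr_refl.
move=> /andP [Hp Hall].
rewrite -catA -[p.2 ++ _]cat0s.
apply: Pr_cat; first exact: Pr_gap.
apply: Pr_cat; [exact: Pr_refl | exact: IH].
Qed.

Definition sub2 (x s : seq T) : Prop :=
  exists ps : seq (seq T * seq T),
    [/\ x = flatten (map snd ps),
        s = flatten (map (fun p => p.1 ++ p.2) ps)
      & all (fun p => d %| size p.1) ps].

Lemma sub2_cat x1 s1 x2 s2 : sub2 x1 s1 -> sub2 x2 s2 -> sub2 (x1 ++ x2) (s1 ++ s2).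
Proof.
move=> [p1 [-> -> A1]] [p2 [-> -> A2]].
by exists (p1 ++ p2); rewrite !map_cat !flatten_cat all_cat A1 A2.
Qed.

Lemma sub2_gap g : d %| size g -> sub2 [::] g.
Proof. by move=> H; exists [:: (g, [::])]; split; rewrite /= ?cats0 ?H. Qed.

Lemma sub2_letter a : sub2 [:: a] [:: a].
Proof. by exists [:: ([::], [:: a])]; split; rewrite /= ?dvdn0. Qed.

Lemma kappaP (w : seq T) i a :
  a \in kappa d w i <-> exists j, [/\ j < size w, j.+1 = i %[mod d] & nth x0 w j = a].
Proof.
rewrite inE; split.
  move=> /existsP [j /andP [/eqP E /eqP F]].
  by exists j; split => //; rewrite -F (tnth_nth x0).
move=> [j [Hj E F]]; apply/existsP; exists (Ordinal Hj).
apply/andP; split; apply/eqP; [exact: E | by rewrite (tnth_nth x0) F].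
Qed.

Lemma size_fn (v : seq T) k : size (flatten (nseq k v)) = k * size v.
Proof. by elim: k => //= k IH; rewrite size_cat IH mulSn. Qed.

Lemma flatten_nseqSr (v : seq T) k : flatten (nseq k.+1 v) = flatten (nseq k v) ++ v.
Proof. elim: k => [|k IH]; first by rewrite /= cats0. have E n : flatten (nseq n.+1 v) = v ++ flatten (nseq n v) by []. by rewrite E [in LHS]IH catA. Qed.

Lemma nth_fn (v : seq T) k r j : r <= size v ->
  j < size (flatten (nseq k v) ++ take r v) ->
  nth x0 (flatten (nseq k v) ++ take r v) j = nth x0 v (j %% size v).
Proof.
move=> Hr; elim: k j => [|k IH] j /=.
  move=> Hj; rewrite nth_take; last by rewrite size_takel in Hj.
  by rewrite modn_small // (leq_trans _ Hr) // -(size_takel Hr).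
rewrite -catA => Hj; rewrite nth_cat.
case: ifP => Hjv; first by rewrite modn_small.
move/negbT: Hjv; rewrite -leqNgt => Hjv.
rewrite IH; last by rewrite (ltn_subLR _ Hjv) size_cat; rewrite !size_cat in Hj.
by rewrite -{2}(subnK Hjv) modnDr.
Qed.

End Aux.

Theorem mainTheorem13 (Sigma : finType) (d : nat) (v : seq Sigma) (r : nat) :
  1 <= d -> d %| size v -> 0 < size v -> r <= d - 1 ->
  forall u : seq Sigma,
    down_d d (star_cat v (take r v)) u <->
    (size u = r %[mod d] /\
     forall i, 1 <= i <= d -> kappa d u i \subset kappa d v i).
Proof.
move=> Hd Hdv Hv Hr u.
have [x0 _] : exists x0 : Sigma, True by move: Hv; case: (v) => // a _ _; exists a.
have Hrlt : r < size v.
  have := dvdn_leq Hv Hdv; move: Hr Hd; clear; lia.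
have Hrv : r <= size v := ltnW Hrlt.
have Hrs : size (take r v) = r by rewrite size_takel.
split.
- move=> [s [[k ->] Hsub]].
  have [HS K] := @subword_Pr _ _ x0 _ _ Hsub.
  split.
    by rewrite HS size_cat size_fn Hrs -modnDml (eqP (dvdn_mull k Hdv)).
  move=> i _; apply/subsetP => a /(@kappaP _ _ x0 _ _ _) [j [Hj E F]].
  have [j' Hj' [E1 E2]] := K j Hj.
  apply/(@kappaP _ _ x0 _ _ _); exists (j' %% size v); split.
  + by rewrite ltn_mod.
  + by rewrite -E -addn1 -modnDml (modn_dvdm _ Hdv) E1 modnDml addn1.
  + by rewrite -(@nth_fn _ x0 _ _ _ _ Hrv Hj') -E2 F.
- move=> [HS K].
  have cond : forall j, j < size u -> exists2 q, q < size v &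
      (q = j %[mod d]) /\ nth x0 v q = nth x0 u j.
    move=> j Hj.
    have Hi : 1 <= (j %% d).+1 <= d by rewrite ltn_mod.
    have Ha : nth x0 u j \in kappa d u (j %% d).+1.
      apply/(@kappaP _ _ x0 _ _ _); exists j; split => //.
      by rewrite -addn1 -[in RHS]addn1 modnDml.
    have /(@kappaP _ _ x0 _ _ _) [q [Hq E F]] := subsetP (K _ Hi) _ Ha.
    exists q => //; split => //.
    apply/eqP; rewrite -(eqn_modDr 1) !addn1; apply/eqP.
    by rewrite E -addn1 -[in RHS]addn1 modnDml.
  have gen : forall u' : seq Sigma, (forall j, j < size u' -> exists2 q, q < size v &
      (q = j %[mod d]) /\ nth x0 v q = nth x0 u' j) ->
      forall q, q <= size v -> q = size u' %[mod d] ->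
      sub2 d u' (flatten (nseq (size u') v) ++ take q v).
    elim/last_ind => [|u' a IH] Hc q Hq Eq.
      apply: sub2_gap; rewrite size_takel //.
      by rewrite /dvdn Eq mod0n.
    have Hc' : forall j, j < size u' -> exists2 q, q < size v &
        (q = j %[mod d]) /\ nth x0 v q = nth x0 u' j.
      move=> j Hj; have Hj' : j < size (rcons u' a) by rewrite size_rcons ltnS ltnW.
      have [q' H1 [H2 H3]] := Hc j Hj'; exists q' => //; split => //.
      by rewrite H3 nth_rcons Hj.
    have [qn Hqn [E1 E2]] := Hc (size u') ltac:(by rewrite size_rcons).
    rewrite nth_rcons ltnn eqxx in E2.
    have := IH Hc' qn (ltnW Hqn) E1.
    rewrite size_rcons flatten_nseqSr -cats1 => Hsub.
    have Hv' : v = take qn v ++ a :: drop qn.+1 v.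
      by rewrite -E2 -drop_nth // cat_take_drop.
    set F := flatten _ in Hsub *.
    have -> : (F ++ v) ++ take q v = ((F ++ take qn v) ++ [:: a]) ++ (drop qn.+1 v ++ take q v).
      by rewrite {1}Hv' -!catA.
    rewrite -[u' ++ [:: a]]cats0.
    apply: sub2_cat; first (apply: sub2_cat => //; exact: sub2_letter).
    apply: sub2_gap.
    rewrite size_cat size_drop size_takel //.
    apply/eqP; rewrite /dvdn.
    have h1 : q %% d = qn.+1 %% d.
      by rewrite Eq size_rcons -addn1 -modnDml -E1 modnDml addn1.
    by rewrite -modnDmr h1 modnDmr subnK // (eqP Hdv).
  have := gen u cond r Hrv (esym HS).
  move=> [ps [E1 E2 A]]; exists (flatten (nseq (size u) v) ++ take r v); split.
    by exists (size u).
  by exists [::], ps.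
Qed.
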